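(* Let $g\ge1$, $n=g+1$, and let $Q$ be the $g\times g$ matrix with $Q_{ii}=2$ and $Q_{ij}=1$ for $i\ne j$ (the tropical Riemann matrix of the genus-$g$ banana graph). The Voronoi polytope $V_Q\subset\mathbb R^g$ has dimension $g$ and exactly $2(2^g-1)$ vertices, namely the set $\bigcup_{k=1}^g[\mathbf k]$, where $[\mathbf k]$ is the set of vectors in $\mathbb R^g$ all of whose entries lie in $\{-\tfrac{k}{g+1},\tfrac{g+1-k}{g+1}\}$ and in which the number of entries equal to $\tfrac{g+1-k}{g+1}$ is either $k$ or $k-1$. The $f$-vector $(f_0,\dots,f_{g-1})$ of $V_Q$ is $f_\ell=\binom{g+1}{\ell}(2^{g+1-\ell}-2)$ for $\ell=0,\dots,g-1$.
   Context: $V_Q=\{\mathbf a\in\mathbb R^g:\ \mathbf a^TQ\mathbf a\le(\mathbf a-\mathbf c)^TQ(\mathbf a-\mathbf c)\ \text{for all }\mathbf c\in\mathbb Z^g\}$. The banana graph of genus $g$ has two vertices $v_1,v_2$ joined by $n=g+1$ edges $e_1,\dots,e_n$; with all edges oriented from $v_2$ to $v_1$ and cycle basis $e_1-e_2,\dots,e_1-e_{g+1}$, the matrix $B\in\mathbb Z^{g\times n}$ has $B_{i,1}=1$, $B_{i,i+1}=-1$ and other entries $0$, and $Q=BB^T$. *)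

(* Defs.v *)
From HB Require Import structures.
From mathcomp Require Import all_boot all_order all_algebra.
From mathcomp Require Import classical_sets reals.
Set Implicit Arguments. Unset Strict Implicit. Unset Printing Implicit Defensive.
Import Order.TTheory GRing.Theory Num.Theory.
Local Open Scope ring_scope.
Local Open Scope classical_set_scope.

Definition qform (R : pzRingType) (g : nat) (Q : 'M[R]_g) (a : 'cV[R]_g) : R :=
  \sum_(i < g) \sum_(j < g) a i 0 * Q i j * a j 0.

Definition dotv (R : pzRingType) (g : nat) (u v : 'cV[R]_g) : R :=
  \sum_(i < g) u i 0 * v i 0.

Definition banana_Q (R : pzRingType) (g : nat) : 'M[R]_g :=
  \matrix_(i, j) (if i == j then 2 else 1).

Definition voronoi (R : realType) (g : nat) (Q : 'M[R]_g) : set 'cV[R]_g :=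
  [set a | forall c : 'I_g -> int,
     qform Q a <= qform Q (a - \col_i ((c i)%:~R))].

(* F is a (nonempty) face of P: intersection of P with a supporting hyperplane
   {x | c.x = b} where c.x <= b on P (c = 0, b = 0 gives P itself). *)
Definition is_face (R : realType) (g : nat) (P F : set 'cV[R]_g) : Prop :=
  (exists x, F x) /\
  exists (c : 'cV[R]_g) (b : R),
    (forall x, P x -> dotv c x <= b) /\
    F = [set x | P x /\ dotv c x = b].

Definition aff_indep (R : realType) (g k : nat) (p : 'I_k.+1 -> 'cV[R]_g) : bool :=
  row_free (\matrix_(i < k) (p (lift ord0 i) - p ord0)^T).

Definition has_affdim (R : realType) (g : nat) (S : set 'cV[R]_g) (k : nat) : Prop :=
  (exists p : 'I_k.+1 -> 'cV[R]_g, (forall i, S (p i)) /\ aff_indep p) /\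
  ~ (exists p : 'I_k.+2 -> 'cV[R]_g, (forall i, S (p i)) /\ aff_indep p).

Definition vertices (R : realType) (g : nat) (P : set 'cV[R]_g) : set 'cV[R]_g :=
  [set v | is_face P [set v]].

Definition bracket (R : realType) (g k : nat) : set 'cV[R]_g :=
  [set a | (forall i, a i 0 = - (k%:R / (g.+1)%:R)
                    \/ a i 0 = (g.+1 - k)%:R / (g.+1)%:R) /\
           (#|[set i | a i 0 == (g.+1 - k)%:R / (g.+1)%:R]| = k \/
            #|[set i | a i 0 == (g.+1 - k)%:R / (g.+1)%:R]| = k.-1)].

(* Main.v *)
Require Import Defs.
From HB Require Import structures.
From mathcomp Require Import all_boot all_order all_algebra.
From mathcomp Require Import classical_sets reals.
From mathcomp Require Import ring lra zify.
Import Order.TTheory GRing.Theory Num.Theory.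
Set Implicit Arguments. Unset Strict Implicit. Unset Printing Implicit Defensive.
Local Open Scope ring_scope.
Local Open Scope classical_set_scope.



Definition Xv (R : realType) (g : nat) (a : 'cV[R]_g) : 'I_g.+1 -> R :=
  fun p => if unlift ord0 p is Some i then - a i 0 else \sum_i a i 0.

Lemma Xv0 (R : realType) g (a : 'cV[R]_g) : Xv a ord0 = \sum_i a i 0.
Proof. by rewrite /Xv unlift_none. Qed.

Lemma XvS (R : realType) g (a : 'cV[R]_g) (i : 'I_g) : Xv a (lift ord0 i) = - a i 0.
Proof. by rewrite /Xv liftK. Qed.

Lemma sumXv (R : realType) g (a : 'cV[R]_g) : \sum_p Xv a p = 0.
Proof.
rewrite big_ord_recl.
under eq_bigr => i _ do rewrite XvS.
by rewrite Xv0 sumrN subrr.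
Qed.

Lemma XvB (R : realType) g (a c : 'cV[R]_g) p : Xv (a - c) p = Xv a p - Xv c p.
Proof.
rewrite /Xv; case: unlift => [i|].
  by rewrite !mxE opprB opprK addrC.
under eq_bigr => i _ do rewrite !mxE.
by rewrite sumrB.
Qed.

Lemma sum_ind1 (R : pzRingType) (I : finType) (F : I -> R) (p : I) :
  \sum_r F r * (r == p)%:R = F p.
Proof.
rewrite (bigD1 p) //= eqxx mulr1 big1 ?addr0 // => r /negbTE ->.
by rewrite mulr0.
Qed.

Lemma sum_ind1' (R : pzRingType) (I : finType) (p : I) :
  \sum_r (r == p)%:R = 1 :> R.
Proof. by rewrite (bigD1 p) //= eqxx big1 ?addr0 // => r /negbTE ->. Qed.

Lemma qformE (R : realType) g (a : 'cV[R]_g) :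
  qform (banana_Q R g) a = \sum_p (Xv a p) ^+ 2.
Proof.
rewrite /qform big_ord_recl.
under [in RHS]eq_bigr => i _ do rewrite XvS sqrrN.
rewrite Xv0.
have -> : \sum_(i < g) \sum_(j < g) a i 0 * banana_Q R g i j * a j 0 =
   \sum_(i < g) (a i 0 * (\sum_j a j 0) + a i 0 * a i 0).
  apply: eq_bigr => i _.
  have -> : \sum_(j < g) a i 0 * banana_Q R g i j * a j 0 =
     \sum_(j < g) (a i 0 * a j 0 + (a i 0 * a j 0) * (j == i)%:R).
    apply: eq_bigr => j _; rewrite mxE eq_sym.
    by case: (j == i); rewrite /= ?mulr1 ?mulr0 ?addr0 // mulr2n; ring.
  by rewrite big_split /= sum_ind1 mulr_sumr.
rewrite big_split /= -mulr_suml -expr2.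
by under eq_bigr => i _ do rewrite -expr2.
Qed.

Definition ind (R : pzRingType) n (H : {set 'I_n}) : 'I_n -> R :=
  fun p => if p \in H then 1 else 0.
Definition meanv (R : realType) n (y : 'I_n -> R) : R := (\sum_p y p) / n%:R.
Definition phi (R : realType) g (y : 'I_g.+1 -> R) : 'cV[R]_g :=
  \col_i (meanv y - y (lift ord0 i)).
Definition cube (R : realType) n (y : 'I_n -> R) := forall p, 0 <= y p <= 1.
Definition CHL (R : realType) n (H L : {set 'I_n}) (y : 'I_n -> R) :=
  cube y /\ (forall p, p \in H -> y p = 1) /\ (forall p, p \in L -> y p = 0).
Definition FHL (R : realType) g (H L : {set 'I_g.+1}) : set 'cV[R]_g :=
  [set a | exists y, CHL H L y /\ a = phi y].

Lemma natn0 (R : realType) g : (g.+1)%:R != 0 :> R.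
Proof. by rewrite pnatr_eq0. Qed.

Lemma sum_mean (R : realType) g (y : 'I_g.+1 -> R) :
  \sum_p y p = (g.+1)%:R * meanv y.
Proof. by rewrite /meanv mulrC divfK ?natn0. Qed.

Lemma Xv_phi (R : realType) g (y : 'I_g.+1 -> R) p :
  Xv (phi y) p = y p - meanv y.
Proof.
have hS := sum_mean y; rewrite big_ord_recl in hS.
case: (unliftP ord0 p) => [i ->|->].
  by rewrite XvS mxE opprB.
rewrite Xv0; under eq_bigr => i _ do rewrite mxE.
rewrite sumrB sumr_const card_ord -mulr_natl.
have -> : \sum_(i < g) y (lift ord0 i) = (g.+1)%:R * meanv y - y ord0 by rewrite -hS; ring.
rewrite -natr1; ring.
Qed.

Definition colz (R : realType) g (c : 'I_g -> int) : 'cV[R]_g := \col_i ((c i)%:~R).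

Lemma vor_ineq (R : realType) g (a : 'cV[R]_g) (c : 'I_g -> int) :
  voronoi (banana_Q R g) a ->
  2 * \sum_p Xv a p * Xv (colz R c) p <= \sum_p Xv (colz R c) p ^+ 2.
Proof.
move=> /(_ c) h; set c' := colz R c; move: h; rewrite !qformE.
under [X in _ <= X -> _]eq_bigr => p _ do rewrite XvB.
have -> : \sum_p (Xv a p - Xv c' p) ^+ 2 =
  \sum_p Xv a p ^+ 2 + (\sum_p Xv c' p ^+ 2 - 2 * \sum_p Xv a p * Xv c' p).
  rewrite mulr_sumr -sumrB -big_split /=; apply: eq_bigr => p _; ring.
lra.
Qed.

Lemma Xv_e (R : realType) g (p q : 'I_g.+1) :
  let c : 'I_g -> int := fun i => (lift ord0 i == q)%:R - (lift ord0 i == p)%:R in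
  forall r, Xv (colz R c) r = (r == p)%:R - (r == q)%:R.
Proof.
move=> c r.
have ce : forall i, ((c i)%:~R : R) = (lift ord0 i == q)%:R - (lift ord0 i == p)%:R.
  by move=> i; rewrite /c intrB; case: eqP; case: eqP.
case: (unliftP ord0 r) => [i ->|->].
  by rewrite XvS /colz mxE ce opprB.
rewrite Xv0 /colz; under eq_bigr => i _ do rewrite mxE ce.
have h1 := sum_ind1' R p.
have h2 := sum_ind1' R q.
rewrite big_ord_recl in h1; rewrite big_ord_recl in h2.
rewrite sumrB; lra.
Qed.

Lemma vor_pair (R : realType) g (a : 'cV[R]_g) p q :
  voronoi (banana_Q R g) a -> Xv a p - Xv a q <= 1.
Proof.
move=> hv; have [->|npq] := eqVneq p q; first by rewrite subrr ler01.
have := vor_ineq (fun i => (lift ord0 i == q)%:R - (lift ord0 i == p)%:R) hv.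
move=> /=; under eq_bigr => r _ do rewrite Xv_e.
under [X in _ <= X]eq_bigr => r _ do rewrite Xv_e.
have e1 : \sum_r Xv a r * ((r == p)%:R - (r == q)%:R) = Xv a p - Xv a q :> R.
  by under eq_bigr => r _ do rewrite mulrBr; rewrite sumrB !sum_ind1.
have e2 : \sum_r ((r == p)%:R - (r == q)%:R) ^+ 2 = 2 :> R.
  under eq_bigr => r _ do rewrite expr2 mulrBr.
  have nqp : (q == p) = false by rewrite eq_sym (negbTE npq).
  rewrite sumrB !sum_ind1 !eqxx (negbTE npq) nqp /=.
  rewrite subr0 sub0r opprK; exact: (natrD R 1 1).
rewrite e1 e2; lra.
Qed.

Lemma vor_sub (R : realType) g (a : 'cV[R]_g) :
  voronoi (banana_Q R g) a -> FHL finset.set0 finset.set0 a.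
Proof.
move=> hv.
case: (@arg_minP _ _ _ ord0 predT (Xv a) isT) => q _ hq.
exists (fun p => Xv a p - Xv a q); split.
  split; last by split=> p; rewrite finset.in_set0.
  move=> p; rewrite subr_ge0 hq //=; exact: vor_pair.
apply/matrixP => i j; rewrite ord1 mxE.
rewrite /meanv sumrB sumXv sumr_const card_ord sub0r -mulNrn.
rewrite -(mulr_natr (- Xv a q)) mulfK ?natn0 //.
rewrite XvS; ring.
Qed.

Lemma Xv_int (R : realType) g (c : 'I_g -> int) p :
  exists k : int, Xv (colz R c) p = k%:~R.
Proof.
case: (unliftP ord0 p) => [i ->|->].
  by exists (- c i); rewrite XvS mxE intrN.
exists (\sum_i c i); rewrite Xv0.
under eq_bigr => i _ do rewrite mxE.
by rewrite (big_morph _ (@intrD R) (mulr0z 1)).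
Qed.

Lemma term_ineq (R : realType) (y : R) (k : int) :
  0 <= y <= 1 -> 2 * y * k%:~R <= k%:~R ^+ 2 + k%:~R.
Proof.
move=> /andP [y0 y1].
have h1 : (0 <= k * (k + 1))%R by nia.
have h2 : (0 <= k * (k - 1))%R by nia.
have r1 : 0 <= (k%:~R : R) * (k%:~R + 1).
  by rewrite -[1]/(1%:~R) -intrD -intrM ler0z.
have r2 : 0 <= (k%:~R : R) * (k%:~R - 1).
  by rewrite -[1]/(1%:~R) -intrB -intrM ler0z.
set r := (k%:~R : R) in r1 r2 *.
have [r0|r0] := lerP 0 r; nra.
Qed.

Lemma vor_sup (R : realType) g (a : 'cV[R]_g) :
  FHL finset.set0 finset.set0 a -> voronoi (banana_Q R g) a.
Proof.
move=> [y [[hc _] ->]] c.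
rewrite !qformE.
under [X in _ <= X]eq_bigr => p _ do rewrite XvB.
have -> : (\col_i ((c i)%:~R) : 'cV[R]_g) = colz R c by [].
set z := Xv (colz R c).
have hz : \sum_p z p = 0 by exact: sumXv.
have -> : \sum_p (Xv (phi y) p - z p) ^+ 2 = \sum_p Xv (phi y) p ^+ 2 +
   \sum_p (z p ^+ 2 + z p - 2 * y p * z p) + (2 * meanv y - 1) * \sum_p z p.
  rewrite mulr_sumr -!big_split; apply: eq_bigr => p _ /=.
  rewrite Xv_phi; ring.
rewrite hz mulr0 addr0 lerDl; apply: sumr_ge0 => p _.
have [k hk] := Xv_int R c p; rewrite /z hk.
rewrite subr_ge0; exact: term_ineq.
Qed.

Lemma V_eq (R : realType) g : voronoi (banana_Q R g) = FHL finset.set0 finset.set0.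
Proof. by apply/seteqP; split => a; [exact: vor_sub | exact: vor_sup]. Qed.



Definition posp (R : realType) (w : R) := if 0 < w then w else 0.

Lemma lp_term (R : realType) (w y : R) : 0 <= y <= 1 -> w * y <= posp w.
Proof.
rewrite /posp => /andP [y0 y1]; case: ifPn => hw; first nra.
rewrite -leNgt in hw; nra.
Qed.

Lemma lp_le (R : realType) n (w y : 'I_n -> R) :
  cube y -> \sum_p w p * y p <= \sum_p posp (w p).
Proof. by move=> hc; apply: ler_sum => p _; apply: lp_term. Qed.

Lemma lp_eq (R : realType) n (w y : 'I_n -> R) : cube y ->
  (\sum_p w p * y p = \sum_p posp (w p)) <->
  ((forall p, 0 < w p -> y p = 1) /\ (forall p, w p < 0 -> y p = 0)).
Proof.
move=> hc; split.
  move=> hs.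
  have h0 : forall p, posp (w p) - w p * y p = 0.
    move=> p; apply: (@psumr_eq0P _ _ predT (fun p => posp (w p) - w p * y p)) => //.
      by move=> q _; rewrite subr_ge0; apply: lp_term.
    by rewrite sumrB hs subrr.
  split=> p hp; have := h0 p; rewrite /posp.
    rewrite hp => /eqP; rewrite subr_eq0 -{1}[w p]mulr1 => /eqP /mulfI -> //.
    by rewrite gt_eqF.
  rewrite ltNge (ltW hp) /= sub0r => /eqP; rewrite oppr_eq0 mulf_eq0 (lt_eqF hp) /=.
  by move/eqP.
move=> [h1 h2]; apply: eq_bigr => p _; rewrite /posp.
case: ltgtP => hw.
- by rewrite h1 // mulr1.
- by rewrite h2 // mulr0.
- by rewrite -hw mul0r.
Qed.

Definition disj n (H L : {set 'I_n}) := forall p, p \in H -> p \notin L.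

Lemma sum_ind (R : realType) n (H : {set 'I_n}) : \sum_p ind R H p = #|H|%:R.
Proof. by rewrite /ind -big_mkcond /= sumr_const. Qed.

Lemma cube_ind (R : realType) n (H : {set 'I_n}) : cube (ind R H).
Proof. by move=> p; rewrite /ind; case: (p \in H); rewrite ?lexx ?ler01. Qed.

Lemma CHL_ind (R : realType) n (H L : {set 'I_n}) : disj H L -> CHL H L (ind R H).
Proof.
move=> hd; split; first exact: cube_ind.
split=> p hp; rewrite /ind; first by rewrite hp.
by case: ifP => // /hd; rewrite hp.
Qed.

Definition W (R : realType) g (c : 'cV[R]_g) (p : 'I_g.+1) : R :=
  (\sum_i c i 0) / (g.+1)%:R - (if unlift ord0 p is Some i then c i 0 else 0).

Lemma W0 (R : realType) g (c : 'cV[R]_g) : W c ord0 = (\sum_i c i 0) / (g.+1)%:R.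
Proof. by rewrite /W unlift_none subr0. Qed.

Lemma WS (R : realType) g (c : 'cV[R]_g) (i : 'I_g) :
  W c (lift ord0 i) = (\sum_i c i 0) / (g.+1)%:R - c i 0.
Proof. by rewrite /W liftK. Qed.

Lemma dot_phi (R : realType) g (c : 'cV[R]_g) y :
  dotv c (phi y) = \sum_p W c p * y p.
Proof.
have hS := sum_mean y; rewrite big_ord_recl in hS.
rewrite /dotv big_ord_recl.
under eq_bigr => i _ do rewrite mxE mulrBr.
under [X in _ = _ + X]eq_bigr => i _ do rewrite WS mulrBl.
rewrite W0 !sumrB -mulr_suml -mulr_sumr.
set S := \sum_i c i 0; set Y := \sum_i y (lift ord0 i).
have e : S / (g.+1)%:R * y ord0 + S / (g.+1)%:R * Y = S * meanv y.
  by rewrite -mulrDr hS mulrA divfK ?natn0.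
rewrite -e; ring.
Qed.

Lemma sumW (R : realType) g (c : 'cV[R]_g) : \sum_p W c p = 0.
Proof.
rewrite big_ord_recl.
under eq_bigr => i _ do rewrite WS.
rewrite W0 sumrB sumr_const card_ord.
set S := \sum_i c i 0.
have e : S / (g.+1)%:R *+ g.+1 = S by rewrite -mulr_natr divfK ?natn0.
by rewrite addrA -mulrS e subrr.
Qed.

Definition Hpos (R : realType) n (w : 'I_n -> R) : {set 'I_n} := [set p | 0 < w p]%SET.
Definition Lneg (R : realType) n (w : 'I_n -> R) : {set 'I_n} := [set p | w p < 0]%SET.

Lemma ind_max (R : realType) n (w : 'I_n -> R) :
  \sum_p w p * ind R (Hpos w) p = \sum_p posp (w p).
Proof.
apply/(lp_eq w (cube_ind R (Hpos w))); split=> p hp; rewrite /ind inE.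
  by rewrite hp.
by rewrite ltNge (ltW hp).
Qed.

Lemma face_sets (R : realType) g (c : 'cV[R]_g) :
  (forall a, FHL finset.set0 finset.set0 a -> dotv c a <= \sum_p posp (W c p)) /\
  [set a | FHL finset.set0 finset.set0 a /\ dotv c a = \sum_p posp (W c p)] =
  FHL (Hpos (W c)) (Lneg (W c)).
Proof.
split.
  by move=> _ [y [[hc _] ->]]; rewrite dot_phi; apply: lp_le.
apply/seteqP; split=> a.
  move=> [[y [[hc _] ->]]]; rewrite dot_phi => /(lp_eq _ hc) [h1 h2].
  exists y; split=> //; split=> //; split=> p; rewrite inE; [exact: h1|exact: h2].
move=> [y [[hc [h1 h2]] ->]]; split.
  by exists y; split=> //; split=> //; split=> p; rewrite finset.in_set0.
rewrite dot_phi; apply/(lp_eq _ hc); split=> p hp.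
  by apply: h1; rewrite inE.
by apply: h2; rewrite inE.
Qed.

Lemma face_char (R : realType) g (F : set 'cV[R]_g) :
  is_face (FHL finset.set0 finset.set0) F ->
  F = FHL finset.set0 finset.set0 \/
  exists H L : {set 'I_g.+1}, H != finset.set0 /\ L != finset.set0 /\ disj H L /\ F = FHL H L.
Proof.
move=> [[a0 Fa0] [c [b [hle hF]]]].
have [hup heq] := face_sets c.
have hb : b = \sum_p posp (W c p).
  apply/eqP; rewrite eq_le; apply/andP; split.
    by move: Fa0; rewrite hF => -[hv <-]; exact: hup.
  rewrite -ind_max -dot_phi; apply: hle.
  exists (ind R (Hpos (W c))); split=> //; split; first exact: cube_ind.
  by split=> p; rewrite finset.in_set0.
rewrite hb heq in hF.
have hsum := sumW c.
have [hH|hH] := eqVneq (Hpos (W c)) finset.set0.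
  have hall : forall p, W c p <= 0.
    move=> p; rewrite leNgt; apply/negP => hp.
    have : p \in Hpos (W c) by rewrite inE.
    by rewrite hH finset.in_set0.
  have h0 : forall p, - W c p = 0.
    move=> p; apply: (@psumr_eq0P _ _ predT (fun p => - W c p)) => //.
      by move=> q _; rewrite oppr_ge0.
    by rewrite sumrN hsum oppr0.
  have hL : Lneg (W c) = finset.set0.
    apply/setP => p; rewrite inE finset.in_set0.
    by have := h0 p => /eqP; rewrite oppr_eq0 => /eqP ->; rewrite ltxx.
  by left; rewrite hF hH hL.
have [hL|hL] := eqVneq (Lneg (W c)) finset.set0.
  have hall : forall p, 0 <= W c p.
    move=> p; rewrite leNgt; apply/negP => hp.
    have : p \in Lneg (W c) by rewrite inE.
    by rewrite hL finset.in_set0.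
  have h0 : forall p, W c p = 0.
    move=> p; apply: (@psumr_eq0P _ _ predT (fun p => W c p)) => //.
  have : Hpos (W c) = finset.set0.
    apply/setP => p; rewrite inE finset.in_set0.
    by rewrite h0 ltxx.
  by move/eqP; rewrite (negbTE hH).
right; exists (Hpos (W c)), (Lneg (W c)); do 3!split => //.
by move=> p; rewrite !inE => hp; rewrite -leNgt ltW.
Qed.

Lemma face_of_HL (R : realType) g (H L : {set 'I_g.+1}) :
  H != finset.set0 -> L != finset.set0 -> disj H L ->
  is_face (FHL finset.set0 finset.set0) (FHL (R:=R) H L).
Proof.
move=> hH hL hd.
pose w : 'I_g.+1 -> R := fun p => #|L|%:R * ind R H p - #|H|%:R * ind R L p.
have hsw : \sum_p w p = 0 by rewrite /w sumrB -!mulr_sumr !sum_ind mulrC subrr.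
pose c : 'cV[R]_g := \col_i (w ord0 - w (lift ord0 i)).
have hsc : \sum_i c i 0 = (g.+1)%:R * w ord0.
  under eq_bigr => i _ do rewrite mxE.
  rewrite sumrB sumr_const card_ord -mulr_natl.
  move: hsw; rewrite big_ord_recl => e.
  have -> : \sum_(i < g) w (lift ord0 i) = - w ord0 by lra.
  by rewrite -natr1; ring.
have hWc : forall p, W c p = w p.
  move=> p; case: (unliftP ord0 p) => [i ->|->].
    by rewrite WS hsc (mulrC _ (w ord0)) mulfK ?natn0 // mxE; ring.
  by rewrite W0 hsc (mulrC _ (w ord0)) mulfK ?natn0.
have hLc : (0 < #|L|)%N by rewrite card_gt0.
have hHc : (0 < #|H|)%N by rewrite card_gt0.
have hHp : Hpos (W c) = H.
  apply/setP => p; rewrite inE hWc /w /ind.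
  case: (boolP (p \in H)) => hp.
    by rewrite (negbTE (hd _ hp)) mulr1 mulr0 subr0 ltr0n.
  case: (p \in L); rewrite ?mulr1 ?mulr0 ?subr0 ?sub0r ?oppr0 ?ltxx //.
  by rewrite oppr_gt0 ltNge ler0n.
have hLn : Lneg (W c) = L.
  apply/setP => p; rewrite inE hWc /w /ind.
  case: (boolP (p \in H)) => hp.
    by rewrite (negbTE (hd _ hp)) mulr1 mulr0 subr0 ltNge ler0n.
  case: (p \in L); rewrite ?mulr1 ?mulr0 ?subr0 ?sub0r ?oppr0 ?ltxx //.
  by rewrite oppr_lt0 ltr0n.
split.
  by exists (phi (ind R H)), (ind R H); split => //; exact: CHL_ind.
exists c, (\sum_p posp (W c p)).
have [hup heq] := face_sets c.
split; first exact: hup.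
by rewrite heq hHp hLn.
Qed.



Lemma aff_UB (R : realType) g (S : set 'cV[R]_g) m k (v : 'cV[R]_g) (A : 'M[R]_(m, g)) :
  (forall x, S x -> exists t : 'rV_m, x = v + (t *m A)^T) -> (m < k)%N ->
  ~ exists p : 'I_k.+1 -> 'cV[R]_g, (forall i, S (p i)) /\ aff_indep p.
Proof.
move=> hS hmk [p [hp hi]].
have hsub : (\matrix_(i < k) (p (lift ord0 i) - p ord0)^T <= A)%MS.
  apply/row_subP => i; rewrite rowK.
  have [t1 e1] := hS _ (hp (lift ord0 i)); have [t0 e0] := hS _ (hp ord0).
  apply/submxP; exists (t1 - t0).
  rewrite e1 e0 mulmxBl; apply/matrixP => a b; rewrite !mxE; ring.
have := mxrankS hsub; move: hi; rewrite /aff_indep /row_free => /eqP ->.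
move=> hk; have := rank_leq_row A; lia.
Qed.

Lemma meanv_comb (R : realType) n m (y0 : 'I_n -> R) (t : 'I_m -> R) (e : 'I_m -> 'I_n -> R) :
  meanv (fun s => y0 s + \sum_r t r * e r s) = meanv y0 + \sum_r t r * meanv (e r).
Proof.
rewrite /meanv big_split /= exchange_big /= mulrDl; congr (_ + _).
rewrite mulr_suml; apply: eq_bigr => r _; rewrite -mulr_sumr mulrA //.
Qed.

Lemma phi_comb (R : realType) g m (y0 : 'I_g.+1 -> R) (t : 'I_m -> R)
  (e : 'I_m -> 'I_g.+1 -> R) :
  phi (fun s => y0 s + \sum_r t r * e r s) =
  phi y0 + (\row_r t r *m \matrix_(r < m) (phi (e r))^T)^T.
Proof.
apply/matrixP => i j; rewrite ord1 !mxE meanv_comb.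
under [X in _ = _ + X]eq_bigr => r _ do rewrite !mxE mulrBr.
rewrite sumrB; ring.
Qed.

Lemma phi0 (R : realType) g : phi (fun _ : 'I_g.+1 => 0 : R) = 0.
Proof.
by apply/matrixP => i j; rewrite !mxE /meanv big1 // mul0r subr0.
Qed.

Lemma Xv_zero (R : realType) g (s : 'I_g.+1) : Xv (0 : 'cV[R]_g) s = 0.
Proof.
rewrite /Xv; case: unlift => [i|]; first by rewrite mxE oppr0.
by rewrite big1 // => i _; rewrite mxE.
Qed.

Lemma phi_const (R : realType) g (v : 'I_g.+1 -> R) :
  phi v = 0 -> forall s, v s = meanv v.
Proof.
move=> h s; have := Xv_phi v s; rewrite h Xv_zero => /eqP.
by rewrite eq_sym subr_eq0 => /eqP.
Qed.

Definition ev (R : realType) n (q : 'I_n) : 'I_n -> R := fun s => (s == q)%:R.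

Lemma phi_add (R : realType) g (y z : 'I_g.+1 -> R) :
  phi (fun s => y s + z s) = phi y + phi z.
Proof.
apply/matrixP => i j; rewrite !mxE /meanv big_split /= mulrDl; ring.
Qed.

Definition ptsfam (R : realType) g m (y0 : 'I_g.+1 -> R) (q : 'I_m -> 'I_g.+1)
  (j : 'I_m.+1) : 'cV[R]_g :=
  phi (fun s => y0 s + if unlift ord0 j is Some r then ev R (q r) s else 0).

Lemma aff_LB (R : realType) g m (q : 'I_m -> 'I_g.+1) (p0 : 'I_g.+1) (y0 : 'I_g.+1 -> R) :
  injective q -> (forall r, q r != p0) -> aff_indep (ptsfam y0 q).
Proof.
move=> hq hp0.
have hD : \matrix_(i < m) (ptsfam y0 q (lift ord0 i) - ptsfam y0 q ord0)^T =
   \matrix_(r < m) (phi (ev R (q r)))^T.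
  apply/row_matrixP => r; rewrite !rowK /ptsfam liftK unlift_none !phi_add phi0.
  by rewrite addr0 addrC addKr.
rewrite /aff_indep hD -kermx_eq0; apply/eqP/row_matrixP => i; rewrite row0.
have /sub_kermxP hu := row_sub i (kermx (\matrix_(r < m) (phi (ev R (q r)))^T)).
set u := row i _ in hu *.
pose v := fun s => \sum_r u 0 r * ev R (q r) s.
have hv : phi v = 0.
  have := phi_comb (fun _ => 0) (fun r => u 0 r) (fun r => ev R (q r)).
  have -> : (fun s => (fun _ : 'I_g.+1 => 0 : R) s + \sum_r u 0 r * ev R (q r) s) = v.
    by apply: boolp.funext => s; rewrite add0r.
  rewrite phi0 add0r => ->.
  have -> : \row_r u 0 r = u by apply/rowP => r; rewrite mxE.
  by rewrite hu trmx0.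
have hc := phi_const hv.
have hv0 : v p0 = 0.
  by rewrite /v big1 // => r _; rewrite /ev eq_sym (negbTE (hp0 r)) mulr0.
apply/rowP => r; rewrite mxE.
have := hc (q r); rewrite -(hc p0) hv0 /v.
under eq_bigr => r' _ do rewrite /ev (inj_eq hq) eq_sym.
by rewrite sum_ind1 /u mxE => ->; rewrite mxE.
Qed.



Lemma FHL_LB (R : realType) g (H L : {set 'I_g.+1}) m (q : 'I_m -> 'I_g.+1) p0 :
  disj H L -> injective q -> (forall r, q r != p0) ->
  (forall r, q r \notin H) -> (forall r, q r \notin L) ->
  exists p : 'I_m.+1 -> 'cV[R]_g, (forall i, FHL H L (p i)) /\ aff_indep p.
Proof.
move=> hd hq hp0 hqH hqL.
exists (ptsfam (ind R H) q); split; last exact: aff_LB hq hp0.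
move=> j; case: (unliftP ord0 j) => [r ->|->]; rewrite /ptsfam ?liftK ?unlift_none;
  (eexists; split; last reflexivity).
  split; [|split] => s; rewrite /ind /ev.
  - have [->|ns] := eqVneq s (q r).
      by rewrite (negbTE (hqH r)) add0r ler01 lexx.
    by rewrite addr0; case: (_ \in H); rewrite ?ler01 ?lexx.
  - move=> hs; have [e|ns] := eqVneq s (q r); first by move: (hqH r); rewrite -e hs.
    by rewrite hs addr0.
  - move=> hs; have [e|ns] := eqVneq s (q r); first by move: (hqL r); rewrite -e hs.
    by rewrite addr0; case: ifP => // /hd; rewrite hs.
split; [|split] => s; rewrite /ind addr0.
- by case: (_ \in H); rewrite ?ler01 ?lexx.
- by move=> ->.
- by move=> hs; case: ifP => // /hd; rewrite hs.
Qed.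

Lemma inM n (H L : {set 'I_n}) s : (s \in ~: (H :|: L)) = (s \notin H) && (s \notin L).
Proof. by rewrite finset.in_setC finset.in_setU negb_or. Qed.

Lemma FHL_UB (R : realType) g (H L : {set 'I_g.+1}) : disj H L ->
  forall x, FHL H L x -> exists t : 'rV_#|~: (H :|: L)|,
    x = phi (ind R H) + (t *m \matrix_(r < #|~: (H :|: L)|) (phi (ev R (enum_val r)))^T)^T.
Proof.
move=> hd x [y [[hc [hH hL]] ->]].
exists (\row_r y (enum_val r)); rewrite -phi_comb; congr phi.
apply: boolp.funext => s.
have hev : forall r : 'I_#|~: (H :|: L)|, s \in H :|: L -> ev R (enum_val r) s = 0.
  move=> r hs; rewrite /ev; case: eqP => // e.
  by have := enum_valP r; rewrite inM -e -negb_or -finset.in_setU hs.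
case: (boolP (s \in H)) => hsH.
  rewrite hH // /ind hsH big1 ?addr0 // => r _.
  by rewrite hev ?mulr0 // finset.in_setU hsH.
case: (boolP (s \in L)) => hsL.
  rewrite hL // /ind (negbTE hsH) big1 ?addr0 // => r _.
  by rewrite hev ?mulr0 // finset.in_setU hsL orbT.
have hsM : s \in ~: (H :|: L) by rewrite inM hsH hsL.
rewrite /ind (negbTE hsH) add0r.
have es := enum_rankK_in hsM hsM.
rewrite -{1}es.
under eq_bigr => r _ do rewrite /ev -{1}es (inj_eq enum_val_inj) eq_sym.
by rewrite sum_ind1.
Qed.

Lemma affdim_FHL (R : realType) g (H L : {set 'I_g.+1}) :
  H != finset.set0 -> disj H L -> has_affdim (FHL (R:=R) H L) #|~: (H :|: L)|.
Proof.
move=> hH hd; split.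
  have [p0 hp0] := set0Pn _ hH.
  apply: (@FHL_LB R g H L #|~: (H :|: L)| enum_val p0 hd enum_val_inj).
  - move=> r; apply/eqP => e; have := enum_valP r; rewrite inM e hp0.
    by [].
  - by move=> r; have := enum_valP r; rewrite inM => /andP [].
  - by move=> r; have := enum_valP r; rewrite inM => /andP [].
exact: (aff_UB (FHL_UB hd)).
Qed.

Lemma affdim_uniq (R : realType) g (H L : {set 'I_g.+1}) l :
  H != finset.set0 -> disj H L -> has_affdim (FHL (R:=R) H L) l -> l = #|~: (H :|: L)|.
Proof.
move=> hH hd [[p [hp hi]] hno].
have [h|h|//] := ltngtP l #|~: (H :|: L)|.
  exfalso; apply: hno.
  have [p0 hp0] := set0Pn _ hH.
  apply: (@FHL_LB R g H L l.+1 (fun r => enum_val (widen_ord h r)) p0 hd).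
  - by move=> r1 r2 /enum_val_inj /(congr1 val) /= /ord_inj.
  - move=> r; apply/eqP => e; have := enum_valP (widen_ord h r); rewrite inM e hp0.
    by [].
  - by move=> r; have := enum_valP (widen_ord h r); rewrite inM => /andP [].
  - by move=> r; have := enum_valP (widen_ord h r); rewrite inM => /andP [].
by exfalso; apply: (aff_UB (FHL_UB hd) h); exists p.
Qed.

Lemma V_LB (R : realType) g m : (m <= g)%N ->
  exists p : 'I_m.+1 -> 'cV[R]_g, (forall i, FHL finset.set0 finset.set0 (p i)) /\ aff_indep p.
Proof.
move=> hm.
apply: (@FHL_LB R g finset.set0 finset.set0 m (fun r => lift ord0 (widen_ord hm r)) ord0).
- by move=> p; rewrite finset.in_set0.
- by move=> r1 r2 /lift_inj /(congr1 val) /= /ord_inj.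
- by move=> r; rewrite eq_sym neq_lift.
- by move=> r; rewrite finset.in_set0.
- by move=> r; rewrite finset.in_set0.
Qed.

Lemma V_UB (R : realType) g :
  ~ exists p : 'I_g.+2 -> 'cV[R]_g, (forall i, FHL finset.set0 finset.set0 (p i)) /\ aff_indep p.
Proof.
apply: (aff_UB (m := g) (v := 0) (A := 1%:M)) => // x _.
by exists x^T; rewrite mulmx1 trmxK add0r.
Qed.

Lemma single_UB (R : realType) g (S : set 'cV[R]_g) v :
  (forall x, S x -> x = v) ->
  ~ exists p : 'I_2 -> 'cV[R]_g, (forall i, S (p i)) /\ aff_indep p.
Proof.
move=> hS; apply: (aff_UB (m := 0) (v := v) (A := 0)) => // x /hS ->.
by exists 0; rewrite mulmx0 trmx0 addr0.
Qed.



Lemma phi_sub (R : realType) g (y z : 'I_g.+1 -> R) :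
  phi (fun s => y s - z s) = phi y - phi z.
Proof.
apply/matrixP => i j; rewrite !mxE /meanv sumrB mulrBl; ring.
Qed.

Lemma phi_inj_cube (R : realType) g (y y' : 'I_g.+1 -> R) :
  cube y -> cube y' -> (exists p, y p = 0) -> (exists p, y p = 1) ->
  phi y = phi y' -> y = y'.
Proof.
move=> hc hc' [p0 h0] [p1 h1] he.
have hd : phi (fun s => y s - y' s) = 0 by rewrite phi_sub he subrr.
have hk := phi_const hd.
have := hk p0; have := hk p1; rewrite h0 h1.
have := hc' p0; have := hc' p1.
move=> /andP [a1 b1] /andP [a0 b0] e1 e0.
apply: boolp.funext => s; have := hk s.
set m := meanv _ in e1 e0 *.
have -> : m = 0 by lra.
by move=> /eqP; rewrite subr_eq0 => /eqP.
Qed.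

Lemma CHL_sub (R : realType) g (H L H' L' : {set 'I_g.+1}) :
  H != finset.set0 -> L != finset.set0 ->
  (forall x, FHL (R:=R) H L x -> FHL H' L' x) ->
  forall y : 'I_g.+1 -> R, CHL H L y -> CHL H' L' y.
Proof.
move=> hH hL hs y hy.
have [y' [hy' e]] := hs _ (ex_intro _ y (conj hy erefl)).
have [p0 hp0] := set0Pn _ hL; have [p1 hp1] := set0Pn _ hH.
have [hc [h1 h0]] := hy.
by rewrite (phi_inj_cube hc hy'.1 (ex_intro _ p0 (h0 _ hp0)) (ex_intro _ p1 (h1 _ hp1)) e).
Qed.

Lemma FHL_inj (R : realType) g (H L H' L' : {set 'I_g.+1}) :
  H != finset.set0 -> L != finset.set0 -> H' != finset.set0 -> L' != finset.set0 ->
  disj H L -> disj H' L' -> FHL (R:=R) H L = FHL H' L' -> H = H' /\ L = L'.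
Proof.
move=> hH hL hH' hL' hd hd' e.
have s1 : forall y : 'I_g.+1 -> R, CHL H L y -> CHL H' L' y.
  by apply: CHL_sub hH hL _ => x; rewrite e.
have s2 : forall y : 'I_g.+1 -> R, CHL H' L' y -> CHL H L y.
  by apply: CHL_sub hH' hL' _ => x; rewrite e.
have key : forall (H L H' L' : {set 'I_g.+1}), disj H L -> disj H' L' ->
    (forall y : 'I_g.+1 -> R, CHL H' L' y -> CHL H L y) ->
    {subset H <= H'} /\ {subset L <= L'}.
  move=> A B A' B' dAB dAB' hs; split=> p hp; apply/negPn/negP => np.
    have [_ [h1 _]] := hs _ (CHL_ind R dAB').
    by have := h1 p hp; rewrite /ind (negbTE np) => /eqP; rewrite eq_sym oner_eq0.
  have hc : CHL A' B' (ind R (~: B')).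
    split; first exact: cube_ind.
    split=> s hs'; rewrite /ind finset.in_setC.
      by rewrite (dAB' _ hs').
    by rewrite hs'.
  have [_ [_ h0]] := hs _ hc.
  by have := h0 p hp; rewrite /ind finset.in_setC np => /eqP; rewrite oner_eq0.
have [k1 k2] := key H L H' L' hd hd' s2.
have [k3 k4] := key H' L' H L hd' hd s1.
split; apply/setP => p; apply/idP/idP.
- exact: k1.
- exact: k3.
- exact: k2.
- exact: k4.
Qed.

Lemma notT_ex n (H : {set 'I_n}) : H != [set: 'I_n]%SET -> exists p, p \notin H.
Proof.
move=> hT; have : ~: H != finset.set0.
  by apply/eqP => e; move/eqP: hT; apply; rewrite -(finset.setCK H) e finset.setC0.
by case/set0Pn => p; rewrite finset.in_setC; exists p.
Qed.

Lemma CHL_compl (R : realType) n (H : {set 'I_n}) (y : 'I_n -> R) :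
  CHL H (~: H) y -> y = ind R H.
Proof.
move=> [_ [h1 h0]]; apply: boolp.funext => s; rewrite /ind.
case: ifP => hs; first exact: h1.
by apply: h0; rewrite finset.in_setC hs.
Qed.

Lemma disj_compl n (H : {set 'I_n}) : disj H (~: H).
Proof. by move=> p hp; rewrite finset.in_setC hp. Qed.

Lemma FHL_compl (R : realType) g (H : {set 'I_g.+1}) :
  FHL (R:=R) H (~: H) = [set phi (ind R H)].
Proof.
apply/seteqP; split => x.
  by move=> [y [/CHL_compl -> ->]].
move=> ->; exists (ind R H); split => //; apply: CHL_ind; exact: disj_compl.
Qed.

Lemma vert_phi (R : realType) g (hg : (1 <= g)%N) (v : 'cV[R]_g) :
  vertices (voronoi (banana_Q R g)) v <->
  exists H : {set 'I_g.+1}, H != finset.set0 /\ H != [set: 'I_g.+1]%SET /\ v = phi (ind R H).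
Proof.
rewrite /vertices V_eq; split.
  move=> /= hf; case: (face_char hf) => [e|[H [L [hH [hL [hd e]]]]]].
    exfalso; have [p [hp hi]] := V_LB R hg.
    apply: (single_UB (S := [set v]) (v := v)) => //.
    by exists p; split => // i; rewrite e.
  have hM : forall s, s \in H \/ s \in L.
    move=> s; case: (boolP (s \in H)) => hs1; first by left.
    case: (boolP (s \in L)) => hs2; first by right.
    exfalso; have [p0 hp0] := set0Pn _ hH.
    have hsM : s \notin H /\ s \notin L by [].
    have hi1 : injective (fun _ : 'I_1 => s) by move=> r1 r2 _; rewrite (ord1 r1) (ord1 r2).
    have hne : forall r : 'I_1, s != p0.
      by move=> _; apply/eqP => es; move: hs1; rewrite es hp0.
    have [p [hp hi]] := @FHL_LB R g H L 1 (fun _ => s) p0 hd hi1 hne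
      (fun _ => hs1) (fun _ => hs2).
    apply: (single_UB (S := [set v]) (v := v)) => //.
    by exists p; split => // i; rewrite e.
  have : FHL H L v by rewrite -e.
  move=> [y [hy ->]]; exists H; split => //; split.
    have [p hp] := set0Pn _ hL; apply/eqP => hT.
    by move: (hd p); rewrite hT inE hp => /(_ isT).
  congr phi; apply: boolp.funext => s; rewrite /ind.
  have [hc [h1 h0]] := hy.
  case: ifP => hs; first exact: h1.
  by apply: h0; case: (hM s) => //; rewrite hs.
move=> [H [hH [hT ->]]] /=.
rewrite -FHL_compl; apply: face_of_HL => //; last exact: disj_compl.
have [p hp] := notT_ex hT.
by apply/set0Pn; exists p; rewrite finset.in_setC.
Qed.

Lemma sub1_neq (R : realType) (x : R) : (x - 1 == x) = false.
Proof. by apply/negbTE/eqP => e; lra. Qed.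

Lemma cardS_set n (P : pred 'I_n) : #|[set i | P i]| = #|[set i | P i]%SET|.
Proof. apply: eq_card => i; rewrite !inE; apply/idP/idP; rewrite in_setE //. Qed.

Lemma card_lift g (P : pred 'I_g.+1) :
  #|[set p | P p]%SET| = (P ord0 + #|[set i : 'I_g | P (lift ord0 i)]%SET|)%N.
Proof.
rewrite -!sum1_card !big_mkcond big_ord_recl /=; congr (_ + _)%N.
  by rewrite inE; case: (P ord0).
by rewrite [in RHS]big_mkcond; apply: eq_bigr => i _; rewrite !inE.
Qed.

Lemma card_compl g (Q : pred 'I_g) :
  #|[set i | ~~ Q i]%SET| = (g - #|[set i | Q i]%SET|)%N.
Proof.
have := cardC [set i | Q i]%SET; rewrite card_ord => e.
have e2 : #|[set i | ~~ Q i]%SET| = #|[predC [set i | Q i]%SET]|.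
  by apply: eq_card => i; rewrite !inE.
lia.
Qed.

Lemma ind_bracket (R : realType) g (H : {set 'I_g.+1}) :
  H != finset.set0 -> H != [set: 'I_g.+1]%SET ->
  @bracket R g (g.+1 - #|H|) (phi (ind R H)) /\ (1 <= g.+1 - #|H| <= g)%N.
Proof.
move=> hH hT; have h1 : (0 < #|H|)%N by rewrite card_gt0.
have [p hp] := notT_ex hT.
have hC : #|~: H| = (g.+1 - #|H|)%N.
  have := cardsCs H; have := max_card (~: H); rewrite !card_ord; lia.
have hC1 : (0 < #|~: H|)%N by rewrite card_gt0; apply/set0Pn; exists p; rewrite finset.in_setC.
split; last lia.
have hk : (g.+1 - (g.+1 - #|H|) = #|H|)%N by lia.
have hmean : meanv (ind R H) = #|H|%:R / (g.+1)%:R by rewrite /meanv sum_ind.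
have hkR : ((g.+1 - #|H|)%:R : R) = (g.+1)%:R - #|H|%:R by rewrite natrB //; lia.
have hent : forall i, phi (ind R H) i 0 = #|H|%:R / (g.+1)%:R - ind R H (lift ord0 i).
  by move=> i; rewrite mxE hmean.
split.
  move=> i; rewrite hent hk /ind; case: ifP => _; [left|right]; last by rewrite subr0.
  by rewrite hkR mulrBl divff ?natn0 //; ring.
rewrite hk cardS_set.
have -> : #|[set i | phi (ind R H) i 0 == #|H|%:R / (g.+1)%:R]%SET| =
          #|[set i : 'I_g | lift ord0 i \notin H]%SET|.
  apply: eq_card => i; rewrite !inE hent /ind; case: ifP => _.
    by rewrite sub1_neq.
  by rewrite subr0 eqxx.
have e1 : #|[set p | p \notin H]%SET| =
    ((ord0 \notin H) + #|[set i : 'I_g | lift ord0 i \notin H]%SET|)%N :=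
  card_lift (fun p => p \notin H).
have e2 : #|[set p | p \notin H]%SET| = #|~: H| by apply: eq_card => q; rewrite !inE.
rewrite e2 hC in e1.
set C := #|[set i : 'I_g | lift ord0 i \notin H]%SET| in e1 *.
set h := #|H| in e1 *.
case: (boolP (ord0 \in H)) => h0; rewrite h0 /= in e1; [left|right]; rewrite -?subn1; lia.
Qed.

Lemma bracket_ind (R : realType) g k (v : 'cV[R]_g) : (1 <= k <= g)%N -> @bracket R g k v ->
  exists H : {set 'I_g.+1}, H != finset.set0 /\ H != [set: 'I_g.+1]%SET /\ v = phi (ind R H).
Proof.
move=> /andP [k1 k2] [hv hc].
set hi := ((g.+1 - k)%:R / (g.+1)%:R : R) in hv hc.
set lo := - (k%:R / (g.+1)%:R : R) in hv.
have hlo : lo = hi - 1.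
  rewrite /lo /hi natrB; last lia.
  by rewrite mulrBl divff ?natn0 //; ring.
rewrite cardS_set in hc.
set c := #|[set i | v i 0 == hi]%SET| in hc.
pose H := [set p | if unlift ord0 p is Some i then v i 0 != hi else c == k]%SET.
have hHc : #|H| = (g.+1 - k)%N.
  rewrite card_lift unlift_none.
  have -> : #|[set i : 'I_g | (fun p => if unlift ord0 p is Some i then v i 0 != hi else c == k)
      (lift ord0 i)]%SET| = #|[set i | ~~ (v i 0 == hi)]%SET|.
    by apply: eq_card => i; rewrite !inE liftK.
  rewrite card_compl -/c.
  have : (c <= g)%N by rewrite /c; have := max_card [set i | v i 0 == hi]%SET; rewrite card_ord.
  case: hc => ->; first by rewrite eqxx /=; lia.
  have -> : (k.-1 == k) = false by apply/negbTE/eqP; rewrite -subn1; lia.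
  by rewrite /= -subn1; lia.
exists H; split; first by rewrite -card_gt0 hHc; lia.
split.
  apply/eqP => hT; move: hHc; rewrite hT cardsT card_ord; lia.
apply/matrixP => i j; rewrite ord1 mxE /meanv sum_ind hHc -/hi /ind inE liftK.
case: (hv i) => e; rewrite e.
  have -> : (lo != hi) by rewrite hlo sub1_neq.
  by rewrite hlo.
by rewrite eqxx subr0.
Qed.



Lemma card_proper n (A : {set 'I_n}) : A != finset.set0 ->
  #|[set H : {set 'I_n} | (H \subset A) && (H != finset.set0) && (H != A)]%SET| = (2 ^ #|A| - 2)%N.
Proof.
move=> hA.
have -> : [set H : {set 'I_n} | (H \subset A) && (H != finset.set0) && (H != A)]%SET =
    (powerset A :\: [set finset.set0; A])%SET.
  apply/setP => H; rewrite !inE ?powersetE.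
  by case: (H \subset A); case: (H == finset.set0); case: (H == A).
rewrite cardsD card_powerset.
have hs : ([set finset.set0; A] \subset powerset A)%SET.
  apply/fintype.subsetP => x; rewrite !inE => /orP [/eqP->|/eqP->]; rewrite ?powersetE ?inE.
    exact: finset.sub0set.
  exact: fintype.subxx.
by rewrite (finset.setIidPr hs) cards2 eq_sym hA.
Qed.

Definition Qset n l := [set x : {set 'I_n} * {set 'I_n} | (#|x.1| == l) &&
   ((x.2 \subset ~: x.1) && (x.2 != finset.set0) && (x.2 != ~: x.1))]%SET.

Lemma card_Q n l : (l < n)%N -> #|Qset n l| = ('C(n, l) * (2 ^ (n - l) - 2))%N.
Proof.
move=> hl.
rewrite -sum1_card.
rewrite (eq_bigl (fun x : {set 'I_n} * {set 'I_n} => (#|x.1| == l) &&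
   ((x.2 \subset ~: x.1) && (x.2 != finset.set0) && (x.2 != ~: x.1)))); last first.
  by move=> x; rewrite inE.
rewrite -(pair_big_dep (fun M : {set 'I_n} => #|M| == l)
   (fun M (H : {set 'I_n}) => (H \subset ~: M) && (H != finset.set0) && (H != ~: M)) (fun _ _ => 1%N)) /=.
rewrite (eq_bigr (fun M => (2 ^ (n - l) - 2)%N)); last first.
  move=> M /eqP hM; rewrite sum1dep_card.
  have hC : #|~: M| = (n - l)%N.
    have := cardsCs M; rewrite hM card_ord => e.
    have := max_card (~: M); rewrite card_ord => e2.
    move: e e2; set C := #|~: M|; lia.
  rewrite card_proper; first by rewrite hC.
  by rewrite -card_gt0 hC; lia.
by rewrite sum_nat_cond_const card_draws card_ord.
Qed.

Lemma Q_props n l (x : {set 'I_n} * {set 'I_n}) : x \in Qset n l ->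
  x.2 != finset.set0 /\ (~: x.1 :\: x.2) != finset.set0 /\ disj x.2 (~: x.1 :\: x.2) /\
  ~: (x.2 :|: (~: x.1 :\: x.2)) = x.1 /\ #|x.1| = l.
Proof.
rewrite inE => /andP [/eqP hl /andP [/andP [hs hne] hnM]].
split => //; split.
  rewrite finset.setD_eq0; apply/negP => hsub; move/negP: hnM; apply.
  by rewrite finset.eqEsubset hs hsub.
split; first by move=> p hp; rewrite !inE hp.
split => //.
apply/setP => p; rewrite !inE.
case: (boolP (p \in x.2)) => hp /=.
  by move/fintype.subsetP: hs => /(_ _ hp); rewrite inE => /negbTE ->.
by rewrite negbK.
Qed.



Lemma ind_inj (R : realType) n (H H' : {set 'I_n}) : ind R H = ind R H' -> H = H'.
Proof.
move=> e; apply/setP => p; have := congr1 (fun f => f p) e; rewrite /ind.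
case: (p \in H); case: (p \in H') => // /eqP; rewrite ?oner_eq0 // eq_sym oner_eq0 //.
Qed.

Lemma ind_phi_inj (R : realType) g (H H' : {set 'I_g.+1}) :
  H != finset.set0 -> H != [set: 'I_g.+1]%SET ->
  phi (ind R H) = phi (ind R H') -> H = H'.
Proof.
move=> hH hT e; apply: (@ind_inj R); apply: phi_inj_cube e; try exact: cube_ind.
  by have [p hp] := notT_ex hT; exists p; rewrite /ind (negbTE hp).
by have [p hp] := set0Pn _ hH; exists p; rewrite /ind hp.
Qed.

Lemma pair_eq (A B : Type) (x y : A * B) : x.1 = y.1 -> x.2 = y.2 -> x = y.
Proof. by case: x; case: y => ? ? ? ? /= -> ->. Qed.

Theorem theorem3p1 (R : realType) (g : nat) (hg : (1 <= g)%N) :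
  has_affdim (voronoi (banana_Q R g)) g /\
  vertices (voronoi (banana_Q R g)) =
    \bigcup_(k in [set k : nat | (1 <= k <= g)%N]) @bracket R g k /\
  (exists f : 'I_(2 * (2 ^ g - 1)) -> 'cV[R]_g,
     injective f /\ range f = vertices (voronoi (banana_Q R g))) /\
  (forall l : nat, (l <= g - 1)%N ->
     exists f : 'I_('C(g.+1, l) * (2 ^ (g.+1 - l) - 2)) -> set 'cV[R]_g,
       injective f /\
       range f = [set F | is_face (voronoi (banana_Q R g)) F /\ has_affdim F l]).
Proof.
have VE := V_eq R g.
split.
  rewrite VE; split; first exact: (V_LB R (leqnn g)).
  exact: V_UB.
split.
  apply/seteqP; split => v.
    move/(vert_phi hg) => [H [hH [hT ->]]].
    have [hb hk] := ind_bracket R hH hT.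
    by exists (g.+1 - #|H|)%N.
  by move=> [k hk hb]; apply/(vert_phi hg); exact: bracket_ind hk hb.
split.
  pose VI := [set H : {set 'I_g.+1} | (H \subset [set: 'I_g.+1]%SET) &&
     (H != finset.set0) && (H != [set: 'I_g.+1]%SET)]%SET.
  have hc : #|VI| = (2 * (2 ^ g - 1))%N.
    rewrite card_proper ?cardsT ?card_ord.
      by rewrite expnS mulnBr muln1.
    by apply/set0Pn; exists ord0; rewrite inE.
  have hVI : forall H, H \in VI -> H != finset.set0 /\ H != [set: 'I_g.+1]%SET.
    by move=> H; rewrite inE => /andP [/andP [_ ->] ->].
  exists (fun i => phi (ind R (enum_val (cast_ord (esym hc) i)))).
  split.
    move=> i j /= e.
    have [hH hT] := hVI _ (enum_valP (cast_ord (esym hc) i)).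
    by move: (ind_phi_inj hH hT e) => /enum_val_inj /cast_ord_inj.
  apply/seteqP; split => v.
    move=> [i _ <-]; apply/(vert_phi hg).
    have [hH hT] := hVI _ (enum_valP (cast_ord (esym hc) i)).
    by exists (enum_val (cast_ord (esym hc) i)).
  move=> /(vert_phi hg) [H [hH [hT ->]]].
  have hHV : H \in VI by rewrite inE finset.subsetT hH hT.
  exists (cast_ord hc (enum_rank_in hHV H)) => //.
  by rewrite cast_ordK enum_rankK_in.
move=> l hl.
have hlt : (l < g)%N by lia.
have hln : (l < g.+1)%N by lia.
have hc := card_Q hln.
exists (fun i => FHL (R:=R) (enum_val (cast_ord (esym hc) i)).2
   (~: (enum_val (cast_ord (esym hc) i)).1 :\: (enum_val (cast_ord (esym hc) i)).2)).
split.
  move=> i j /= e.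
  have [hH [hL [hd [hM _]]]] := Q_props (enum_valP (cast_ord (esym hc) i)).
  have [hH' [hL' [hd' [hM' _]]]] := Q_props (enum_valP (cast_ord (esym hc) j)).
  have [e1 e2] := FHL_inj hH hL hH' hL' hd hd' e.
  apply: (@cast_ord_inj _ _ (esym hc)); apply: enum_val_inj; apply: pair_eq => //.
  by rewrite -hM -hM' e2 e1.
apply/seteqP; split => F.
  move=> [i _ <-].
  have [hH [hL [hd [hM hl1]]]] := Q_props (enum_valP (cast_ord (esym hc) i)).
  split; first by rewrite VE; exact: face_of_HL.
  by have := affdim_FHL R hH hd; rewrite hM hl1.
move=> [hf ha]; rewrite VE in hf.
case: (face_char hf) => [e|[H [L [hH [hL [hd e]]]]]].
  exfalso; rewrite e in ha; have [_ hno] := ha; apply: hno.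
  exact: (V_LB R hlt).
have hl' : l = #|~: (H :|: L)| by move: ha; rewrite e => ha; exact: affdim_uniq hH hd ha.
have hcomp : ~: ~: (H :|: L) :\: H = L.
  rewrite finset.setCK; apply/setP => p; rewrite !inE.
  case: (boolP (p \in H)) => hp /=; last by [].
  by rewrite (negbTE (hd _ hp)).
have hx : (~: (H :|: L), H) \in Qset g.+1 l.
  rewrite inE /= -hl' eqxx /= hH andbT; apply/andP; split.
    by apply/fintype.subsetP => p hp; rewrite finset.setCK inE hp.
  rewrite finset.setCK; apply/eqP => eHL.
  have [p hp] := set0Pn _ hL.
  have : p \in H by rewrite eHL inE hp orbT.
  by move/hd; rewrite hp.
exists (cast_ord hc (enum_rank_in hx (~: (H :|: L), H))) => //=.
by rewrite cast_ordK enum_rankK_in //= hcomp e.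
Qed.
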